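(* Let $p_c,q_c\in\mathbb{R}_{\ge0}$, $M=\begin{bmatrix} p_c & q_c\\ -q_c & p_c\end{bmatrix}$, $v_{\min}>0$, and consider the constant power load (CPL) whose current response to a voltage $v$ is $i=\dfrac{1}{\|v\|_2^2}Mv$, with $\|v\|_2\ge v_{\min}$. Write $v=v_0+v_\delta$, where $v_0$ is an admissible operating voltage with $V_0=\|v_0\|_2\ge v_{\min}$ (in particular $V_0>0$), and define the ripple ratio $\rho=\|v_\delta\|_\infty/V_0$, assumed to satisfy $2\rho+\rho^2<1$. Define the frequency-preserving (linear) part of the current $i_{\mathrm{lin}}=\frac{1}{V_0^2}M(v_0+v_\delta)$ and the nonlinear remainder $i_{\mathrm{har}}=i-i_{\mathrm{lin}}$. Then $$\|i_{\mathrm{har}}\|_2\le \frac{\sigma_{\max}(M)}{v_{\min}^2}\,\frac{(\rho+1)(\rho+2)}{1-(2\rho+\rho^2)}\,\|v_\delta\|_2,$$ and hence the CPL is $\varepsilon(\rho)$-frequency-preserving with $\varepsilon(\rho)=\dfrac{\sigma_{\max}(M)}{v_{\min}^2}\,\dfrac{(\rho+1)(\rho+2)}{1-(2\rho+\rho^2)}$.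
   Context: $\sigma_{\max}(M)$ is the largest singular value of $M$; $\|\cdot\|_2$ denotes the 2-norm (called $\mathcal{L}_2$-norm in the paper) and $\|\cdot\|_\infty$ the sup norm. ''The CPL is $\varepsilon$-frequency-preserving'' means that its current decomposes as the linear, frequency-preserving part $i_{\mathrm{lin}}$ plus a nonlinear remainder $i_{\mathrm{har}}$ satisfying $\|i_{\mathrm{har}}\|_2\le\varepsilon\|v_\delta\|_2$. *)

(* Defs.v *)
From HB Require Import structures.
From mathcomp Require Import all_boot all_order all_algebra.
From mathcomp Require Import all_classical all_reals all_analysis.
Set Implicit Arguments. Unset Strict Implicit. Unset Printing Implicit Defensive.
Import Order.TTheory GRing.Theory Num.Theory.
Local Open Scope ring_scope.
Local Open Scope classical_set_scope.

Definition vnorm {R : realType} (x : 'cV[R]_2) : R :=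
  Num.sqrt (\sum_(i < 2) x i ord0 ^+ 2).

(* The CPL matrix M = [[pc, qc], [-qc, pc]]. *)
Definition cplM {R : realType} (pc qc : R) : 'M[R]_2 :=
  \matrix_(i < 2, j < 2)
    (if i == j then pc else if i == ord0 then qc else - qc).

Definition sigma_max {R : realType} (M : 'M[R]_2) : R :=
  Num.sqrt (sup [set a : R | eigenvalue (M^T *m M) a]).

Definition L2norm {R : realType} (f : R -> 'cV[R]_2) : \bar R :=
  Lnorm (@lebesgue_measure R) 2%:E (fun t => (vnorm (f t))%:E).

Definition supnorm {R : realType} (f : R -> 'cV[R]_2) : \bar R :=
  ereal_sup [set (vnorm (f t))%:E | t in [set: R]].

Definition cpl_current {R : realType} (pc qc : R) (v : R -> 'cV[R]_2) :
  R -> 'cV[R]_2 :=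
  fun t => (vnorm (v t) ^+ 2)^-1 *: (cplM pc qc *m v t).

Definition cpl_lin {R : realType} (pc qc : R) (v0 : 'cV[R]_2)
  (vd : R -> 'cV[R]_2) : R -> 'cV[R]_2 :=
  fun t => (vnorm v0 ^+ 2)^-1 *: (cplM pc qc *m (v0 + vd t)).

Definition cpl_har {R : realType} (pc qc : R) (v0 : 'cV[R]_2)
  (vd : R -> 'cV[R]_2) : R -> 'cV[R]_2 :=
  fun t => cpl_current pc qc (fun s => v0 + vd s) t - cpl_lin pc qc v0 vd t.

Definition eps_rho {R : realType} (pc qc vmin rho : R) : R :=
  sigma_max (cplM pc qc) / vmin ^+ 2 *
  ((rho + 1) * (rho + 2) / (1 - (2 * rho + rho ^+ 2))).

(* Main.v *)
Require Import Defs.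
From HB Require Import structures.
From mathcomp Require Import all_boot all_order all_algebra.
From mathcomp Require Import all_classical all_reals all_analysis measurable_realfun.
From mathcomp Require Import ring lra.
Import Order.TTheory GRing.Theory Num.Theory.
Local Open Scope ring_scope.
Local Open Scope classical_set_scope.
Set Implicit Arguments. Unset Strict Implicit.
Local Notation i0 := (@Ordinal 2 0 isT).
Local Notation i1 := (@Ordinal 2 1 isT).

Lemma key_real (R : realType) (a b c d s rho vmin : R) :
  0 < vmin -> vmin <= a -> vmin <= b -> 0 <= c -> 0 <= s -> c <= rho * b ->
  a ^+ 2 = b ^+ 2 + 2 * d + c ^+ 2 -> `|d| <= b * c ->
  `|a ^-2 - b ^-2| * s * a <= s * (2 + rho) / vmin ^+ 2 * c.
Proof.
move=> v0 va vb c0 s0 crb ha hd.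
have a0 : 0 < a by apply: lt_le_trans va.
have b0 : 0 < b by apply: lt_le_trans vb.
have -> : a ^-2 - b ^-2 = (b ^+ 2 - a ^+ 2) / (a ^+ 2 * b ^+ 2).
  by field; rewrite ?mulf_neq0 ?expf_neq0 ?gt_eqF.
rewrite normrM [`|(_ * _)^-1|]ger0_norm; last by rewrite invr_ge0 mulr_ge0 ?exprn_ge0 ?ltW.
have h1 : `|b ^+ 2 - a ^+ 2| <= c * ((2 + rho) * b).
  rewrite ha.
  have -> : b ^+ 2 - (b ^+ 2 + 2 * d + c ^+ 2) = - (2 * d + c ^+ 2) by ring.
  rewrite normrN; apply: (le_trans (ler_normD _ _)).
  rewrite normrM (ger0_norm (ler0n _ 2)) [`|c ^+ 2|]ger0_norm ?exprn_ge0 //.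
  have : c ^+ 2 <= c * (rho * b) by rewrite expr2; apply: ler_wpM2l.
  nra.
have h2 : `|b ^+ 2 - a ^+ 2| / (a ^+ 2 * b ^+ 2) * a <= (2 + rho) * c / (a * b).
  rewrite ler_pdivlMr ?mulr_gt0 //.
  have -> : `|b ^+ 2 - a ^+ 2| / (a ^+ 2 * b ^+ 2) * a * (a * b) = `|b ^+ 2 - a ^+ 2| / b.
    by field; rewrite ?mulf_neq0 ?expf_neq0 ?gt_eqF.
  rewrite ler_pdivrMr //. nra.
have h3 : (2 + rho) * c / (a * b) <= (2 + rho) * c / vmin ^+ 2.
  have rho0 : 0 <= rho.
    have : 0 <= rho * b by apply: le_trans crb.
    by rewrite pmulr_lge0.
  apply: ler_wpM2l; first by apply: mulr_ge0 => //; lra.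
  rewrite lef_pV2 ?posrE ?mulr_gt0 ?exprn_gt0 // expr2. by apply: ler_pM; lra.
have H := ler_wpM2l s0 (le_trans h2 h3).
have -> : `|b ^+ 2 - a ^+ 2| / (a ^+ 2 * b ^+ 2) * s * a = s * (`|b ^+ 2 - a ^+ 2| / (a ^+ 2 * b ^+ 2) * a) by ring.
have -> : s * (2 + rho) / vmin ^+ 2 * c = s * ((2 + rho) * c / vmin ^+ 2) by ring.
exact: H.
Qed.

Section vec.
Variable R : realType.

Lemma sum2 (F : 'I_2 -> R) : \sum_(i < 2) F i = F i0 + F i1.
Proof. by rewrite big_ord_recr big_ord1 /=; congr (F _ + F _); apply: val_inj. Qed.

Lemma vnorm_sq (z : 'cV[R]_2) : vnorm z ^+ 2 = z i0 ord0 ^+ 2 + z i1 ord0 ^+ 2.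
Proof. by rewrite /vnorm sum2 sqr_sqrtr // addr_ge0 // sqr_ge0. Qed.

Lemma vnorm_ge0 (z : 'cV[R]_2) : 0 <= vnorm z.
Proof. exact: sqrtr_ge0. Qed.

Lemma vnormZ (k : R) (z : 'cV[R]_2) : vnorm (k *: z) = `|k| * vnorm z.
Proof.
rewrite /vnorm !sum2 !mxE.
have -> : (k * z i0 ord0) ^+ 2 + (k * z i1 ord0) ^+ 2 = k ^+ 2 * (z i0 ord0 ^+ 2 + z i1 ord0 ^+ 2) by ring.
by rewrite sqrtrM ?sqr_ge0 // sqrtr_sqr.
Qed.

Lemma cplM0 (p q : R) (z : 'cV[R]_2) : (cplM p q *m z) i0 ord0 = p * z i0 ord0 + q * z i1 ord0.
Proof. by rewrite mxE sum2 !mxE. Qed.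

Lemma cplM1 (p q : R) (z : 'cV[R]_2) : (cplM p q *m z) i1 ord0 = - q * z i0 ord0 + p * z i1 ord0.
Proof. by rewrite mxE sum2 !mxE. Qed.

Lemma vnormM (p q : R) (z : 'cV[R]_2) : vnorm (cplM p q *m z) = Num.sqrt (p ^+ 2 + q ^+ 2) * vnorm z.
Proof.
rewrite /vnorm !sum2 cplM0 cplM1 -sqrtrM ?addr_ge0 ?sqr_ge0 //; congr Num.sqrt; ring.
Qed.

Lemma vnormD_sq (x y : 'cV[R]_2) : exists d,
  vnorm (x + y) ^+ 2 = vnorm x ^+ 2 + 2 * d + vnorm y ^+ 2 /\ `|d| <= vnorm x * vnorm y.
Proof.
exists (x i0 ord0 * y i0 ord0 + x i1 ord0 * y i1 ord0); split.
  by rewrite !vnorm_sq !mxE; ring.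
have hb := vnorm_ge0 x; have hc := vnorm_ge0 y.
have hx := vnorm_sq x; have hy := vnorm_sq y.
set d := _ + _.
have hd : d ^+ 2 <= (vnorm x * vnorm y) ^+ 2.
  rewrite exprMn hx hy /d.
  have := sqr_ge0 (x i0 ord0 * y i1 ord0 - x i1 ord0 * y i0 ord0). nra.
have hn : `|d| ^+ 2 = d ^+ 2 by rewrite real_normK ?num_real.
have := normr_ge0 d.
move: hn hd; set D := `|d|; set bc := vnorm x * vnorm y.
have : 0 <= bc by apply: mulr_ge0.
nra.
Qed.

Lemma cplMTM (p q : R) : (cplM p q)^T *m cplM p q = (p ^+ 2 + q ^+ 2)%:M.
Proof.
apply/matrixP => i j; rewrite !mxE sum2 !mxE.
have Hi : i = i0 \/ i = i1.
  by case: i => [[|[|]]] //= Hi; [left|right]; apply: val_inj.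
have Hj : j = i0 \/ j = i1.
  by case: j => [[|[|]]] //= Hj; [left|right]; apply: val_inj.
by case: Hi => ->; case: Hj => -> /=; ring.
Qed.

Lemma sigma_maxE (p q : R) : sigma_max (cplM p q) = Num.sqrt (p ^+ 2 + q ^+ 2).
Proof.
rewrite /sigma_max cplMTM.
set c := p ^+ 2 + q ^+ 2.
have -> : [set a : R | eigenvalue (c%:M : 'M[R]_2) a] = [set c].
  apply/seteqP; split => a /=.
    move/eigenvalueP => [v] hv nv.
    rewrite mul_mx_scalar in hv.
    apply/eqP; rewrite eq_sym -subr_eq0.
    have : (c - a) *: v = 0 by rewrite scalerBl hv subrr.
    by move/eqP; rewrite scaler_eq0 (negbTE nv) orbF.
  move=> ->; apply/eigenvalueP; exists (const_mx 1).
    by rewrite mul_mx_scalar.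
  apply/eqP => /matrixP /(_ ord0 ord0); rewrite !mxE => /eqP; by rewrite oner_eq0.
by rewrite sup1.
Qed.
End vec.

Lemma lee_fin_sq (R : realType) (K : R) : (0 <= (K ^+ 2)%:E)%E.
Proof. by rewrite lee_fin sqr_ge0. Qed.

Lemma ge0_le_integralT d (T : measurableType d) (R : realType) (mu : {measure set T -> \bar R}) (f g : T -> \bar R) :
  (forall x, (0 <= f x)%E) -> (forall x, (f x <= g x)%E) ->
  (\int[mu]_x f x <= \int[mu]_x g x)%E.
Proof.
move=> f0 fg.
rewrite !ge0_integralTE //; last by move=> x; apply: le_trans (f0 x) (fg x).
apply: le_ereal_sup => y [h hf <-]; exists h => //= x.
exact: le_trans (hf x) (fg x).
Qed.

Theorem lemma2 (R : realType) (pc qc vmin : R) (v0 : 'cV[R]_2)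
  (vd : R -> 'cV[R]_2) (rho : R) :
  0 <= pc -> 0 <= qc -> 0 < vmin ->
  vmin <= vnorm v0 ->
  (forall t, vmin <= vnorm (v0 + vd t)) ->
  (forall i : 'I_2, measurable_fun [set: R] (fun t => vd t i ord0)) ->
  supnorm vd = (rho * vnorm v0)%:E ->
  2 * rho + rho ^+ 2 < 1 ->
  (L2norm (cpl_har pc qc v0 vd) <=
     (eps_rho pc qc vmin rho)%:E * L2norm vd)%E.
Proof.
move=> p0 q0 vm0 vmb vma mvd hsup hrho.
set b := vnorm v0.
set s := Num.sqrt (pc ^+ 2 + qc ^+ 2).
have s0 : 0 <= s by apply: sqrtr_ge0.
have b0 : 0 < b by apply: lt_le_trans vmb.
have hc t : vnorm (vd t) <= rho * b.
  rewrite -lee_fin -hsup /supnorm; apply: ereal_sup_ubound; by exists t.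
have rho0 : 0 <= rho.
  have : 0 <= rho * b by apply: le_trans (hc 0) ; apply: vnorm_ge0.
  by rewrite pmulr_lge0.
set K := s * (2 + rho) / vmin ^+ 2.
have K0 : 0 <= K by rewrite /K; apply: mulr_ge0; [apply: mulr_ge0 => //; lra| rewrite invr_ge0 exprn_ge0 // ltW].
have hpt t : vnorm (cpl_har pc qc v0 vd t) <= K * vnorm (vd t).
  have -> : cpl_har pc qc v0 vd t = ((vnorm (v0 + vd t)) ^-2 - b ^-2) *: (cplM pc qc *m (v0 + vd t)).
    by rewrite /cpl_har /cpl_current /cpl_lin scalerBl.
  rewrite vnormZ vnormM mulrA.
  have [d [hd1 hd2]] := vnormD_sq v0 (vd t).
  apply: (key_real (d := d)) => //; exact: vnorm_ge0.
have hKe : K <= eps_rho pc qc vmin rho.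
  rewrite /eps_rho sigma_maxE -/s /K.
  have -> : s * (2 + rho) / vmin ^+ 2 = s / vmin ^+ 2 * (2 + rho) by rewrite mulrAC.
  apply: ler_wpM2l; first by rewrite divr_ge0 // exprn_ge0 // ltW.
  rewrite ler_pdivlMr; last lra.
  nra.
rewrite /L2norm !Lnorm.unlock.
set Ih := (\int[_]_x _)%E.
set Id := (\int[_]_x _)%E.
have Id0 : (0 <= Id)%E by apply: integral_ge0 => x _; apply: poweR_ge0.
have Ih0 : (0 <= Ih)%E by apply: integral_ge0 => x _; apply: poweR_ge0.
have hsq (f : R -> 'cV[R]_2) x : (`|(vnorm (f x))%:E| `^ 2 = ((vnorm (f x)) ^+ 2)%:E)%E.
  by rewrite abse_EFin ger0_norm ?vnorm_ge0 // poweR_EFin -[2]/(2%:R) powR_mulrn // vnorm_ge0.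
have mI : measurable_fun [set: R] (fun x => (`|(vnorm (vd x))%:E| `^ 2)%E).
  have -> : (fun x => (`|(vnorm (vd x))%:E| `^ 2)%E) =
      EFin \o (fun x => vd x i0 ord0 ^+ 2 + vd x i1 ord0 ^+ 2).
    by apply: funext => x; rewrite hsq vnorm_sq.
  apply/measurable_EFinP; apply: measurable_funD; apply: measurable_funX; exact: mvd.
have h1 : (Ih <= (K ^+ 2)%:E * Id)%E.
  have E : (\int[lebesgue_measure]_x ((K ^+ 2)%:E * `|(vnorm (vd x))%:E| `^ 2) = (K ^+ 2)%:E * Id)%E.
    apply: ge0_integralZl_EFin => //; last by rewrite exprn_ge0.
    by move=> x _; apply: poweR_ge0.
  rewrite -E; apply: ge0_le_integralT => x; first by apply: poweR_ge0.
  rewrite !hsq -EFinM lee_fin -exprMn.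
  by rewrite !expr2; apply: ler_pM; rewrite ?vnorm_ge0 ?hpt.
have h2 : (Ih `^ 2^-1 <= ((K ^+ 2)%:E * Id) `^ 2^-1)%E.
  apply: gt0_ler_poweR; last exact: h1.
  - by rewrite invr_ge0.
  - by rewrite in_itv; apply/andP; split; [exact: Ih0 | exact: leey].
  - rewrite in_itv; apply/andP; split; last exact: leey.
    exact: (mule_ge0 (lee_fin_sq K) Id0).
apply: (le_trans h2).
rewrite poweRM; last 2 first.
- by rewrite lee_fin exprn_ge0.
- exact: Id0.
rewrite poweR_EFin (powR12_sqrt (sqr_ge0 K)) sqrtr_sqr (ger0_norm K0).
apply: lee_wpmul2r; first exact: poweR_ge0.
by rewrite lee_fin.
Qed.
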